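(* Let $G$ be an abelian group. Fix an imaginary unit $\hat I\in\mathbb{H}$ and identify the circle group $\mathbb{T}$ with the unit circle of $\mathbb{C}_{\hat I}$, so that $\widehat G=\mathrm{Hom}(G,\mathbb{T})\subseteq G^\delta$. The following are equivalent: (i) $\widehat G=G^\delta$; (ii) every $\phi\in\mathcal{P}^{\mathbb{H}}_*(G)$ is real-valued; (iii) $G$ has exponent $\le 2$, i.e. $2g=0$ for all $g\in G$.
   Context: $\mathbb{H}$ is the real quaternion algebra, $\mathbb{S}=\{q\in\mathbb{H}:|q|=1\}$. An imaginary unit is $I\in\mathbb{H}$ with $\mathrm{Re}\,I=0$, $|I|=1$; $\mathbb{C}_I=\mathbb{R}\oplus I\mathbb{R}$. For an abelian group $G$, $\phi:G\to\mathbb{H}$ is positive definite if for all $k$, $g_i\in G$, $q_i\in\mathbb{H}$, $\sum_{i,j=1}^k\overline{q_i}\,\phi(g_j-g_i)\,q_j$ is a nonnegative real number; $\mathcal{P}^{\mathbb{H}}_*(G)$ is the set of such $\phi$ with $\phi(0)=1$. $G^\delta=\mathrm{Hom}(G,\mathbb{S})$. *)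

(* Defs.v *)
From HB Require Import structures.
From mathcomp Require Import all_boot all_order all_algebra.
From mathcomp Require Import reals.
Set Implicit Arguments. Unset Strict Implicit. Unset Printing Implicit Defensive.
Import Order.TTheory GRing.Theory Num.Theory.
Local Open Scope ring_scope.

Section Quat.
Variable R : realType.

(* The real quaternion algebra H: q = q0 + q1 i + q2 j + q3 k. *)
Record quat := Quat { q0 : R; q1 : R; q2 : R; q3 : R }.

Definition qone : quat := Quat 1 0 0 0.

Definition qmul (a b : quat) : quat :=
  Quat (q0 a * q0 b - q1 a * q1 b - q2 a * q2 b - q3 a * q3 b)
       (q0 a * q1 b + q1 a * q0 b + q2 a * q3 b - q3 a * q2 b)
       (q0 a * q2 b - q1 a * q3 b + q2 a * q0 b + q3 a * q1 b)
       (q0 a * q3 b + q1 a * q2 b - q2 a * q1 b + q3 a * q0 b).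

Definition qconj (a : quat) : quat := Quat (q0 a) (- q1 a) (- q2 a) (- q3 a).

Definition qnorm2 (a : quat) : R := q0 a ^+ 2 + q1 a ^+ 2 + q2 a ^+ 2 + q3 a ^+ 2.

Definition qreal (a : quat) : Prop := q1 a = 0 /\ q2 a = 0 /\ q3 a = 0.

Definition imag_unit (I : quat) : Prop := q0 I = 0 /\ qnorm2 I = 1.

Definition in_CI (I x : quat) : Prop :=
  exists a b : R, x = Quat a (b * q1 I) (b * q2 I) (b * q3 I).

Variable G : zmodType.

(* phi : G -> H positive definite: for every k, g_i, q_i the sum
   sum_{i,j} conj(q_i) phi(g_j - g_i) q_j is a nonnegative real number.
   The quaternion sum is taken componentwise. *)
Definition pd_term (phi : G -> quat) k (g : 'I_k -> G) (q : 'I_k -> quat)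
  (i j : 'I_k) : quat :=
  qmul (qmul (qconj (q i)) (phi (g j - g i))) (q j).

Definition pos_def (phi : G -> quat) : Prop :=
  forall (k : nat) (g : 'I_k -> G) (q : 'I_k -> quat),
    [/\ \sum_(i < k) \sum_(j < k) q1 (pd_term phi g q i j) = 0,
        \sum_(i < k) \sum_(j < k) q2 (pd_term phi g q i j) = 0,
        \sum_(i < k) \sum_(j < k) q3 (pd_term phi g q i j) = 0 &
        0 <= \sum_(i < k) \sum_(j < k) q0 (pd_term phi g q i j)].

Definition PH_star (phi : G -> quat) : Prop := pos_def phi /\ phi 0 = qone.

Definition Gdelta (f : G -> quat) : Prop :=
  (forall a b : G, f (a + b) = qmul (f a) (f b)) /\ (forall a, qnorm2 (f a) = 1).

Definition Ghat (I : quat) (f : G -> quat) : Prop :=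
  Gdelta f /\ forall a, in_CI I (f a).

End Quat.

(* Main.v *)
Require Import Defs.
From HB Require Import structures.
From mathcomp Require Import all_boot all_order all_algebra.
From mathcomp Require Import reals classical_sets boolp.
From mathcomp Require Import complex ring lra.
Import Order.TTheory GRing.Theory Num.Theory.
Local Open Scope ring_scope.

Lemma qmulA {R : realType} (a b c : quat R) :
  qmul (qmul a b) c = qmul a (qmul b c).
Proof. case: a => ????; case: b => ????; case: c => ????; rewrite /qmul /=; congr Quat; ring. Qed.

Lemma qmul1q {R : realType} (a : quat R) : qmul (qone R) a = a.
Proof. case: a => ????; rewrite /qmul /=; congr Quat; ring. Qed.

Lemma qmulq1 {R : realType} (a : quat R) : qmul a (qone R) = a.
Proof. case: a => ????; rewrite /qmul /=; congr Quat; ring. Qed.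

Lemma qconjK_mul {R : realType} (a : quat R) :
  qnorm2 a = 1 -> qmul (qconj a) a = qone R /\ qmul a (qconj a) = qone R.
Proof.
case: a => a0 a1 a2 a3; rewrite /qnorm2 /qmul /qone /= => H.
split; congr Quat; first [ring | rewrite -H; ring].
Qed.

Lemma sq1_real {R : realType} (a : quat R) :
  qnorm2 a = 1 -> qmul a a = qone R -> [/\ q1 a = 0, q2 a = 0 & q3 a = 0].
Proof.
case: a => a0 a1 a2 a3; rewrite /qnorm2 /qmul /qone /= => H [E0 _ _ _].
have S : a1 ^+ 2 + a2 ^+ 2 + a3 ^+ 2 = 0 by rewrite -!expr2 in E0; lra.
have h1 := sqr_ge0 a1; have h2 := sqr_ge0 a2; have h3 := sqr_ge0 a3.
have e1 : a1 ^+ 2 = 0 by lra.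
have e2 : a2 ^+ 2 = 0 by lra.
have e3 : a3 ^+ 2 = 0 by lra.
by split; apply/eqP; rewrite -sqrf_eq0; apply/eqP.
Qed.

Lemma term0 {R : realType} (a b c d : quat R) :
  q0 (qmul (qmul (qconj a) (qmul (qconj b) c)) d) =
  q0 (qmul b a) * q0 (qmul c d) + q1 (qmul b a) * q1 (qmul c d)
  + q2 (qmul b a) * q2 (qmul c d) + q3 (qmul b a) * q3 (qmul c d).
Proof. case: a => ????; case: b => ????; case: c => ????; case: d => ????; rewrite /qmul /=; ring. Qed.

Lemma term1 {R : realType} (a b c d : quat R) :
  q1 (qmul (qmul (qconj a) (qmul (qconj b) c)) d) =
  q0 (qmul b a) * q1 (qmul c d) + (- q1 (qmul b a)) * q0 (qmul c d)
  + (- q2 (qmul b a)) * q3 (qmul c d) + q3 (qmul b a) * q2 (qmul c d).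
Proof. case: a => ????; case: b => ????; case: c => ????; case: d => ????; rewrite /qmul /=; ring. Qed.

Lemma term2 {R : realType} (a b c d : quat R) :
  q2 (qmul (qmul (qconj a) (qmul (qconj b) c)) d) =
  q0 (qmul b a) * q2 (qmul c d) + q1 (qmul b a) * q3 (qmul c d)
  + (- q2 (qmul b a)) * q0 (qmul c d) + (- q3 (qmul b a)) * q1 (qmul c d).
Proof. case: a => ????; case: b => ????; case: c => ????; case: d => ????; rewrite /qmul /=; ring. Qed.

Lemma term3 {R : realType} (a b c d : quat R) :
  q3 (qmul (qmul (qconj a) (qmul (qconj b) c)) d) =
  q0 (qmul b a) * q3 (qmul c d) + (- q1 (qmul b a)) * q2 (qmul c d)
  + q2 (qmul b a) * q1 (qmul c d) + (- q3 (qmul b a)) * q0 (qmul c d).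
Proof. case: a => ????; case: b => ????; case: c => ????; case: d => ????; rewrite /qmul /=; ring. Qed.

Lemma sum4 {R : realType} (k : nat) (a b c d e f h l : 'I_k -> R) :
  \sum_(i < k) \sum_(j < k) (a i * b j + c i * d j + e i * f j + h i * l j) =
  (\sum_i a i) * (\sum_j b j) + (\sum_i c i) * (\sum_j d j)
  + (\sum_i e i) * (\sum_j f j) + (\sum_i h i) * (\sum_j l j).
Proof.
rewrite !big_distrlr /= -!big_split /=; apply: eq_bigr => i _.
by rewrite -!big_split.
Qed.

Lemma Gdelta0 {R : realType} {G : zmodType} (f : G -> quat R) :
  Gdelta f -> f 0 = qone R.
Proof.
move=> [Hm Hn]; have E := Hm 0 0; rewrite addr0 in E.
have [C1 _] := qconjK_mul _ (Hn 0).
have : qmul (qconj (f 0)) (f 0) = qmul (qconj (f 0)) (qmul (f 0) (f 0)) by rewrite -E.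
by rewrite -qmulA C1 qmul1q.
Qed.

Lemma GdeltaB {R : realType} {G : zmodType} (f : G -> quat R) (x y : G) :
  Gdelta f -> f (y - x) = qmul (qconj (f x)) (f y).
Proof.
move=> Hf; have := Hf => -[Hm Hn]; rewrite addrC Hm; congr qmul.
have [_ C2] := qconjK_mul _ (Hn x).
have E : qmul (f (- x)) (f x) = qone R by rewrite -Hm addNr Gdelta0.
by rewrite -[LHS]qmulq1 -C2 -qmulA E qmul1q.
Qed.

Lemma Gdelta_pd {R : realType} {G : zmodType} (f : G -> quat R) :
  Gdelta f -> PH_star f.
Proof.
move=> Hf; split; last exact: Gdelta0.
move=> k g q; rewrite /pd_term.
set v := fun i => qmul (f (g i)) (q i).
split.
- under eq_bigr => i _ do under eq_bigr => j _ do rewrite (GdeltaB _ _ _ Hf) term1.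
  rewrite (sum4 _ (fun i => q0 (v i)) (fun j => q1 (v j)) (fun i => - q1 (v i)) (fun j => q0 (v j))
     (fun i => - q2 (v i)) (fun j => q3 (v j)) (fun i => q3 (v i)) (fun j => q2 (v j))).
  rewrite !sumrN; ring.
- under eq_bigr => i _ do under eq_bigr => j _ do rewrite (GdeltaB _ _ _ Hf) term2.
  rewrite (sum4 _ (fun i => q0 (v i)) (fun j => q2 (v j)) (fun i => q1 (v i)) (fun j => q3 (v j))
     (fun i => - q2 (v i)) (fun j => q0 (v j)) (fun i => - q3 (v i)) (fun j => q1 (v j))).
  rewrite !sumrN; ring.
- under eq_bigr => i _ do under eq_bigr => j _ do rewrite (GdeltaB _ _ _ Hf) term3.
  rewrite (sum4 _ (fun i => q0 (v i)) (fun j => q3 (v j)) (fun i => - q1 (v i)) (fun j => q2 (v j))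
     (fun i => q2 (v i)) (fun j => q1 (v j)) (fun i => - q3 (v i)) (fun j => q0 (v j))).
  rewrite !sumrN; ring.
- under eq_bigr => i _ do under eq_bigr => j _ do rewrite (GdeltaB _ _ _ Hf) term0.
  rewrite (sum4 _ (fun i => q0 (v i)) (fun j => q0 (v j)) (fun i => q1 (v i)) (fun j => q1 (v j))
     (fun i => q2 (v i)) (fun j => q2 (v j)) (fun i => q3 (v i)) (fun j => q3 (v j))).
  by rewrite -!expr2 !addr_ge0 ?sqr_ge0.
Qed.


Lemma qone_term {R : realType} (a : quat R) :
  qmul (qmul (qconj (qone R)) a) (qone R) = a.
Proof.
have -> : qconj (qone R) = qone R by rewrite /qconj /qone /= oppr0.
by rewrite qmulq1 qmul1q.
Qed.

Lemma P3_P2 {R : realType} {G : zmodType} :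
  (forall g : G, g + g = 0) ->
  (forall phi : G -> quat R, PH_star phi -> forall g, qreal (phi g)).
Proof.
move=> H3 phi [Hpd H0] x.
have Nx : - x = x by apply/eqP; rewrite eq_sym -addr_eq0 H3.
have [E1 E2 E3 _] := Hpd 2 (fun i => x *+ i) (fun _ => qone R).
move: E1 E2 E3; rewrite !big_ord_recl !big_ord0 /pd_term !qone_term /=.
rewrite /bump /= !mulr0n !mulr1n !subrr subr0 sub0r Nx H0 /=.
by move=> E1 E2 E3; split; lra.
Qed.

Lemma P3_P1 {R : realType} {G : zmodType} (I : quat R) :
  (forall g : G, g + g = 0) ->
  (forall f : G -> quat R, Gdelta f <-> Ghat I f).
Proof.
move=> H3 f; split; last by case.
move=> Hf; split => // a.
have Hq : qmul (f a) (f a) = qone R by rewrite -Hf.1 H3 Gdelta0.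
have [e1 e2 e3] := sq1_real _ (Hf.2 a) Hq.
exists (q0 (f a)), 0; move: e1 e2 e3; case: (f a) => ???? /= -> -> ->.
by rewrite !mul0r.
Qed.


Definition pchar {R : realType} {G : zmodType} (H : G -> Prop) (chi : G -> R[i]) : Prop :=
  [/\ H 0, (forall a b, H a -> H b -> H (a - b)),
      (forall a b, H a -> H b -> chi (a + b) = chi a * chi b) &
      (forall a, H a -> chi a != 0)].

Lemma pcharN {R : realType} {G : zmodType} {H} {chi : G -> R[i]} {a} :
  pchar H chi -> H a -> H (- a).
Proof. by case=> H0 HB _ _ Ha; rewrite -sub0r; apply: HB. Qed.

Lemma pcharD {R : realType} {G : zmodType} {H} {chi : G -> R[i]} {a b} :
  pchar H chi -> H a -> H b -> H (a + b).
Proof.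
move=> P Ha Hb; have := P => -[_ HB _ _].
by rewrite -[b]opprK; apply: HB => //; apply: pcharN P Hb.
Qed.

Lemma pchar0 {R : realType} {G : zmodType} {H} {chi : G -> R[i]} :
  pchar H chi -> chi 0 = 1.
Proof.
case=> H0 _ HM HN; have := HM 0 0 H0 H0; rewrite addr0 => E.
by apply: (mulfI (HN 0 H0)); rewrite mulr1 -E.
Qed.

Lemma pcharNchi {R : realType} {G : zmodType} {H} {chi : G -> R[i]} {a} :
  pchar H chi -> H a -> chi (- a) = (chi a)^-1.
Proof.
move=> P Ha; have := P => -[_ _ HM HN].
have E := HM a (- a) Ha (pcharN P Ha); rewrite subrr (pchar0 P) in E.
by apply: (mulfI (HN a Ha)); rewrite -E mulfV // HN.
Qed.

Lemma pcharBchi {R : realType} {G : zmodType} {H} {chi : G -> R[i]} {a b} :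
  pchar H chi -> H a -> H b -> chi (a - b) = chi a / chi b.
Proof.
move=> P Ha Hb; have := P => -[_ _ HM HN].
rewrite HM //; [by rewrite (pcharNchi P Hb) | exact: pcharN P Hb].
Qed.

Lemma pchar_muln {R : realType} {G : zmodType} {H} {chi : G -> R[i]} {a} n :
  pchar H chi -> H a -> H (a *+ n) /\ chi (a *+ n) = chi a ^+ n.
Proof.
move=> P Ha; have := P => -[H0 _ HM _].
elim: n => [|n [IH1 IH2]]; first by rewrite mulr0n expr0 (pchar0 P).
by rewrite mulrSr exprSr HM // -IH2; split => //; apply: (pcharD P).
Qed.

Lemma pchar_mulz {R : realType} {G : zmodType} {H} {chi : G -> R[i]} {a} k :
  pchar H chi -> H a -> H (a *~ k) /\ chi (a *~ k) = chi a ^ k.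
Proof.
move=> P Ha; case: k => n.
  exact: pchar_muln.
have [h1 h2] := pchar_muln n.+1 P Ha.
rewrite NegzE mulrNz -exprnN (pcharNchi P h1) h2; split => //.
exact: pcharN P h1.
Qed.


Lemma pchar_cyc {R : realType} {G : zmodType} {H} {chi : G -> R[i]} (x : G) :
  pchar H chi ->
  (forall k : int, H (x *~ k) -> k = 0) \/
  exists m : nat, [/\ (0 < m)%N, H (x *~ m) &
    forall k : int, H (x *~ k) -> exists q : int, k = q * m].
Proof.
move=> P; have := P => -[H0 HB _ _].
case: (pselect (exists k : int, k != 0 /\ H (x *~ k))) => [[k1 [k0 Hk1]]|nE]; last first.
  left=> k Hk; case: (eqVneq k 0) => // k0; exfalso; apply: nE; by exists k.
right.
have [n [n0 Hn]] : exists n : nat, (0 < n)%N /\ H (x *+ n).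
  case: k1 k0 Hk1 => n.
  - by move=> n0 Hn; exists n; split => //; rewrite lt0n.
  - move=> _ Hn; exists n.+1; split=> //; rewrite NegzE mulrNz in Hn.
    by rewrite -[x *+ _]opprK; apply: pcharN P Hn.
have ex : exists n, (0 < n)%N && `[< H (x *+ n) >].
  by exists n; rewrite n0; apply/asboolP.
case: (ex_minnP ex) => m /andP[m0 /asboolP Hm] minm.
exists m; split => // k Hk; exists (k %/ m)%Z.
have m0' : (m : int) != 0 by rewrite eqz_nat -lt0n.
have Er := divz_eq k m.
have Hr : H (x *~ (k %% m)%Z).
  have -> : (k %% m)%Z = k - (k %/ m)%Z * m.
    by apply/eqP; rewrite eq_sym subr_eq addrC -Er.
  rewrite mulrzBr; apply: HB => //; rewrite mulrC mulrzA.
  exact: (pchar_mulz _ P Hm).1.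
have r0 : 0 <= (k %% m)%Z := modz_ge0 k m0'.
have rm : (k %% m)%Z < m by apply: ltz_pmod; rewrite ltz_nat.
case: (eqVneq (k %% m)%Z 0) => [r0'|rn0]; first by rewrite r0' addr0 in Er.
exfalso.
have [n' En'] : exists n' : nat, (k %% m)%Z = n' by exists `|(k %% m)%Z|%N; rewrite gez0_abs.
rewrite En' in rm rn0 Hr; rewrite ltz_nat in rm.
have : (m <= n')%N by apply: minm; rewrite lt0n -eqz_nat rn0; apply/asboolP.
by rewrite leqNgt rm.
Qed.

Lemma pchar_compat {R : realType} {G : zmodType} {H} {chi : G -> R[i]} (x : G) :
  pchar H chi ->
  exists w : R[i], w != 0 /\ forall k : int, H (x *~ k) -> chi (x *~ k) = w ^ k.
Proof.
move=> P; have := P => -[H0 HB HM HN].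
case: (pchar_cyc x P) => [Z|[m [m0 Hm Hdiv]]].
  exists 1; split; first exact: oner_neq0.
  by move=> k Hk; rewrite (Z k Hk) mulr0z expr0z (pchar0 P).
exists (m.-root (chi (x *~ m))); split; first by rewrite rootC_eq0 // HN.
move=> k Hk; have [q ->] := Hdiv k Hk.
rewrite mulrC mulrzA (pchar_mulz q P Hm).2 -exprz_exp.
congr (_ ^ _); exact: (esym (rootCK m0 _)).
Qed.

Lemma pchar_ext {R : realType} {G : zmodType} {H} {chi : G -> R[i]} (x : G) (w : R[i]) :
  pchar H chi -> w != 0 -> (forall k : int, H (x *~ k) -> chi (x *~ k) = w ^ k) ->
  exists H' (chi' : G -> R[i]),
    [/\ pchar H' chi', (forall y, H y -> H' y /\ chi' y = chi y), H' x & chi' x = w].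
Proof.
move=> P w0 Hw; have := P => -[H0 HB HM HN].
pose H' y := exists hk : G * int, H hk.1 /\ y = hk.1 + x *~ hk.2.
pose chi' y := if pselect (H' y) is left e
  then chi (projT1 (cid e)).1 * w ^ (projT1 (cid e)).2 else 1.
have spec : forall h k, H h -> chi' (h + x *~ k) = chi h * w ^ k.
  move=> h k Hh; rewrite /chi'; case: pselect => [e|ne]; last first.
    by exfalso; apply: ne; exists (h, k).
  case: (cid e) => [[h1 k1] /= [Hh1 E]].
  have D : h - h1 = x *~ (k1 - k).
    rewrite mulrzBr; apply: (addIr (x *~ k)).
    by rewrite subrK addrAC E addrAC subrr add0r.
  have Hd : H (x *~ (k1 - k)) by rewrite -D; apply: HB.
  have E2 := Hw _ Hd; rewrite -D (pcharBchi P Hh Hh1) in E2.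
  have e3 : w ^ k1 = w ^ k * w ^ (k1 - k) by rewrite -expfzDr // addrC subrK.
  rewrite e3 -E2; have := HN _ Hh1 => h10; field; exact: h10.
exists H', chi'; split.
- split.
  + by exists (0, 0); rewrite /= mulr0z addr0.
  + move=> a b [[h1 k1] /= [Hh1 ->]] [[h2 k2] /= [Hh2 ->]]; exists (h1 - h2, k1 - k2).
    by split; [exact: HB | rewrite /= mulrzBr opprD addrACA].
  + move=> a b [[h1 k1] /= [Hh1 ->]] [[h2 k2] /= [Hh2 ->]].
    rewrite addrACA -mulrzDr (spec _ _ (pcharD P Hh1 Hh2)) (spec _ _ Hh1) (spec _ _ Hh2).
    by rewrite HM // expfzDr // mulrACA.
  + move=> a [[h k] /= [Hh ->]]; rewrite (spec _ _ Hh); apply: mulf_neq0; [exact: HN | exact: expfz_neq0].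
- move=> y Hy; split; first by exists (y, 0); rewrite /= mulr0z addr0.
  by have := spec y 0 Hy; rewrite mulr0z addr0 expr0z mulr1.
- by exists (0, 1); rewrite /= mulr1z add0r.
- by have := spec 0 1 H0; rewrite mulr1z add0r (pchar0 P) mul1r expr1z.
Qed.


Lemma pchar_total {R : realType} {G : zmodType} (x0 : G) (w0 : R[i]) :
  (exists H (chi : G -> R[i]), [/\ pchar H chi, H x0 & chi x0 = w0]) ->
  exists chi : G -> R[i],
    [/\ (forall a b, chi (a + b) = chi a * chi b), (forall a, chi a != 0) & chi x0 = w0].
Proof.
move=> [Hb [chib [Pb Hbx Hbw]]].
pose T := {p : (G -> Prop) * (G -> R[i]) | [/\ pchar p.1 p.2, p.1 x0 & p.2 x0 = w0]}.
pose le (s t : T) := forall y, (sval s).1 y -> (sval t).1 y /\ (sval t).2 y = (sval s).2 y.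
pose t0 : T := exist _ (Hb, chib) (And3 Pb Hbx Hbw).
have Pt : forall t : T, pchar (sval t).1 (sval t).2 by move=> t; case: (proj2_sig t).
have Xt : forall t : T, (sval t).1 x0 by move=> t; case: (proj2_sig t).
have Wt : forall t : T, (sval t).2 x0 = w0 by move=> t; case: (proj2_sig t).
have [t tmax] : exists t, premaximal (fun s t => `[< le s t >]) t.
apply: (@ZL_preorder T t0 (fun s t => `[< le s t >])).
- by move=> s; apply/asboolP => y Hy.
- move=> r s u /asboolP Hrs /asboolP Hsu; apply/asboolP => y Hy.
  have [h1 e1] := Hrs y Hy; have [h2 e2] := Hsu y h1; split => //.
  by rewrite e2 e1.
- move=> A Atot.
  case: (pselect (exists t, A t)) => [[t1 At1]|nA]; last first.
    by exists t0 => s As; exfalso; apply: nA; exists s.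
  pose HU y := exists t, A t /\ (sval t).1 y.
  pose chiU y := if pselect (HU y) is left e then (sval (projT1 (cid e))).2 y else 1.
  have key : forall t y, A t -> (sval t).1 y -> chiU y = (sval t).2 y.
    move=> t y At Hty; rewrite /chiU; case: pselect => [e|ne]; last first.
      by exfalso; apply: ne; exists t.
    case: (cid e) => t' [At' Ht'y] /=.
    case: (Atot t t' At At') => /asboolP L.
      by case: (L y Hty).
    by case: (L y Ht'y) => _ ->.
  have common : forall t s a b, A t -> A s -> (sval t).1 a -> (sval s).1 b ->
      exists u, [/\ A u, (sval u).1 a & (sval u).1 b].
    move=> t s a b At As Ha Hb'; case: (Atot t s At As) => /asboolP L.
    - by exists s; split => //; exact: (L a Ha).1.
    - by exists t; split => //; exact: (L b Hb').1.
  have PU : [/\ pchar HU chiU, HU x0 & chiU x0 = w0].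
    split; first split.
    - by exists t1; split => //; case: (Pt t1).
    - move=> a b [t [At Ha]] [s [As Hb']].
      have [u [Au Hua Hub]] := common _ _ _ _ At As Ha Hb'.
      by exists u; split => //; case: (Pt u) => _ HB _ _; apply: HB.
    - move=> a b [t [At Ha]] [s [As Hb']].
      have [u [Au Hua Hub]] := common _ _ _ _ At As Ha Hb'.
      have [_ _ HM _] := Pt u.
      by rewrite (key u _ Au (pcharD (Pt u) Hua Hub)) (key u _ Au Hua) (key u _ Au Hub) HM.
    - move=> a [t [At Ha]]; rewrite (key t _ At Ha); by case: (Pt t) => _ _ _ ->.
    - by exists t1; split => //; exact: Xt.
    - by rewrite (key t1 _ At1 (Xt t1)); exact: Wt.
  exists (exist _ (HU, chiU) PU) => s As; apply/asboolP => y Hy /=.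
  by split; [exists s | exact: key].
have full : forall y, (sval t).1 y.
  move=> y; case: (pselect ((sval t).1 y)) => // ny; exfalso.
  have [w [w0' Hw]] := pchar_compat y (Pt t).
  have [H' [chi' [P' ext Hy _]]] := pchar_ext y w (Pt t) w0' Hw.
  have PT' : [/\ pchar H' chi', H' x0 & chi' x0 = w0].
    by split => //; [exact: (ext _ (Xt t)).1 | rewrite (ext _ (Xt t)).2 Wt].
  pose t' : T := exist _ (H', chi') PT'.
  have : `[< le t t' >] by apply/asboolP => z Hz; exact: ext z Hz.
  by move=> /tmax /asboolP L; apply: ny; exact: (L y Hy).1.
exists (sval t).2; have [_ _ HM HN] := Pt t; split.
- by move=> a b; apply: HM.
- by move=> a; apply: HN.
- exact: Wt.
Qed.


Lemma base_root {R : realType} {G : zmodType} (x0 : G) : x0 != 0 ->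
  exists w0 : R[i], [/\ `|w0| = 1, w0 != 1 &
    forall k : int, x0 *~ k = 0 -> 1 = w0 ^ k].
Proof.
move=> nx0.
have P0 : pchar (fun y : G => y = 0) (fun _ => (1 : R[i])).
  split => //; first by move=> a b -> ->; rewrite subrr.
  - by move=> *; rewrite mulr1.
  - by move=> *; exact: oner_neq0.
case: (pchar_cyc x0 P0) => [Z|[m [m0 Hm Hdiv]]].
  exists (-1); split.
  - by rewrite normrN normr1.
  - apply/eqP => E; have := congr1 (@complex.Re R) E => /=; lra.
  - by move=> k /Z ->; rewrite expr0z.
have m1 : m != 1%N by apply: contraNneq nx0 => e; rewrite -Hm e mulr1z.
pose p : {poly R[i]} := \poly_(i < m) 1.
have sp : size p = m by rewrite size_poly_eq // oner_neq0.
have [w rw] : exists w, root p w by apply/closed_rootP; rewrite sp.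
rewrite /root horner_poly in rw.
have S0 : \sum_(i < m) w ^+ i = 0.
  by move: rw => /eqP; under eq_bigr => i _ do rewrite mul1r.
have wm : w ^+ m = 1 by apply/eqP; rewrite -subr_eq0 subrX1 S0 mulr0.
have w1 : w != 1.
  apply/eqP => e; move: S0; rewrite e.
  under eq_bigr => i _ do rewrite expr1n.
  by rewrite sumr_const card_ord => /eqP; rewrite pnatr_eq0 => /eqP e2; move: m0; rewrite e2.
have nw : `|w| = 1.
  apply/eqP; rewrite -(pexpr_eq1 m0) ?normr_ge0 //.
  by rewrite -normrX wm normr1.
exists w; split => // k Hk.
have [q ->] := Hdiv k Hk.
rewrite mulrC -exprz_exp.
have -> : w ^ (m : int) = 1 by exact: wm.
by rewrite exp1rz.
Qed.

Lemma char_exists {R : realType} {G : zmodType} (g : G) : g + g != 0 ->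
  exists psi : G -> R[i],
    [/\ (forall a b, psi (a + b) = psi a * psi b), (forall a, `|psi a| = 1)
      & complex.Im (psi g) != 0].
Proof.
move=> ng.
have [w0 [nw0 w01 Hw0]] := base_root (R := R) _ ng.
have w00 : w0 != 0 by rewrite -normr_eq0 nw0 oner_neq0.
have P0 : pchar (fun y : G => y = 0) (fun _ => (1 : R[i])).
  split => //; first by move=> a b -> ->; rewrite subrr.
  - by move=> *; rewrite mulr1.
  - by move=> *; exact: oner_neq0.
have [H' [chi' [P' _ Hx Hcx]]] := pchar_ext (g + g) w0 P0 w00 Hw0.
have [chi [HM HN Hc]] := pchar_total (g + g) w0 (ex_intro _ H' (ex_intro _ chi' (And3 P' Hx Hcx))).
pose psi a := chi a / `|chi a|.
have hom : forall a b, psi (a + b) = psi a * psi b.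
  by move=> a b; rewrite /psi HM normrM invfM mulrACA.
have nrm : forall a, `|psi a| = 1.
  move=> a; rewrite /psi normrM normfV normr_id mulfV //.
  by rewrite normr_eq0 HN.
exists psi; split => //.
apply/negP => /eqP Im0.
have Hn := nrm g; have Hh := hom g g.
have Hw : psi (g + g) = w0 by rewrite /psi Hc nw0 divr1.
rewrite Hw in Hh; move: Hn Hh; case: (psi g) Im0 => r s /= -> Hn Hh.
rewrite normc_def /= in Hn.
have := congr1 (@complex.Re R) Hn => /=.
rewrite expr0n addr0 sqrtr_sqr => nr.
have r2 : r ^+ 2 = 1 by rewrite -real_normK ?num_real // nr expr1n.
move/eqP: w01; apply; rewrite Hh.
apply/eqP; rewrite eq_complex /=; apply/andP; split; apply/eqP.
- by rewrite mulr0 subr0 -expr2 r2.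
- by rewrite mulr0 mul0r addr0.
Qed.

Definition Qc {R : realType} (z : R[i]) : quat R :=
  Quat (complex.Re z) (complex.Im z) 0 0.
Definition Qj {R : realType} (z : R[i]) : quat R :=
  Quat (complex.Re z) 0 (complex.Im z) 0.

Lemma unit_sum {R : realType} (z : R[i]) : `|z| = 1 ->
  complex.Re z ^+ 2 + complex.Im z ^+ 2 = 1.
Proof.
rewrite normc_def => E; have := congr1 (@complex.Re R) E => /= Es.
rewrite -[LHS]sqr_sqrtr; first by rewrite Es expr1n.
by rewrite addr_ge0 ?sqr_ge0.
Qed.

Lemma Qc_Gdelta {R : realType} {G : zmodType} (psi : G -> R[i]) :
  (forall a b, psi (a + b) = psi a * psi b) -> (forall a, `|psi a| = 1) ->
  Gdelta (fun a => Qc (psi a)).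
Proof.
move=> HM HN; split.
- move=> a b; rewrite HM /Qc /qmul; case: (psi a) => ??; case: (psi b) => ?? /=.
  congr Quat; ring.
- move=> a; have := unit_sum _ (HN a); rewrite /qnorm2 /Qc /=.
  by rewrite expr0n !addr0.
Qed.

Lemma Qj_Gdelta {R : realType} {G : zmodType} (psi : G -> R[i]) :
  (forall a b, psi (a + b) = psi a * psi b) -> (forall a, `|psi a| = 1) ->
  Gdelta (fun a => Qj (psi a)).
Proof.
move=> HM HN; split.
- move=> a b; rewrite HM /Qj /qmul; case: (psi a) => ??; case: (psi b) => ?? /=.
  congr Quat; ring.
- move=> a; have := unit_sum _ (HN a); rewrite /qnorm2 /Qj /=.
  by rewrite expr0n !addr0.
Qed.

Lemma P1_P3 {R : realType} {G : zmodType} (I : quat R) :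
  (forall f : G -> quat R, Gdelta f <-> Ghat I f) -> (forall g : G, g + g = 0).
Proof.
move=> H1 g; case: (eqVneq (g + g) 0) => // ng; exfalso.
have [psi [HM HN Hi]] := char_exists (R := R) _ ng.
case: (eqVneq (q1 I) 0) => I1.
- have [_ Hc] := (H1 _).1 (Qc_Gdelta _ HM HN).
  have [a [b E]] := Hc g; move: E; rewrite /Qc I1 mulr0 => -[_ Ei _ _].
  by move/eqP: Hi; apply.
- have [_ Hc] := (H1 _).1 (Qj_Gdelta _ HM HN).
  have [a [b E]] := Hc g; move: E; rewrite /Qj => -[_ E1 E2 _].
  have b0 : b = 0.
    by move/esym/eqP: E1; rewrite mulf_eq0 (negbTE I1) orbF => /eqP.
  by move/eqP: Hi; apply; rewrite E2 b0 mul0r.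
Qed.

Lemma P2_P3 {R : realType} {G : zmodType} :
  (forall phi : G -> quat R, PH_star phi -> forall g, qreal (phi g)) ->
  (forall g : G, g + g = 0).
Proof.
move=> H2 g; case: (eqVneq (g + g) 0) => // ng; exfalso.
have [psi [HM HN Hi]] := char_exists (R := R) _ ng.
have [e1 _] := H2 _ (Gdelta_pd _ (Qc_Gdelta _ HM HN)) g.
by move/eqP: Hi; apply; exact: e1.
Qed.

Theorem mainTheorem14 (R : realType) (G : zmodType) (I : quat R) :
  imag_unit I ->
  ((forall f : G -> quat R, Gdelta f <-> Ghat I f) <->
   (forall phi : G -> quat R, PH_star phi -> forall g, qreal (phi g))) /\
  ((forall phi : G -> quat R, PH_star phi -> forall g, qreal (phi g)) <->
   (forall g : G, g + g = 0)).
Proof.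
move=> _; split; split => h.
- exact: P3_P2 (P1_P3 _ h).
- exact: P3_P1 _ (P2_P3 h).
- exact: P2_P3 h.
- exact: P3_P2 h.
Qed.
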